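(* Let $n,p,d\in\mathbb{N}$ and let $M\subseteq\mathbb{R}^{n+p+d}$ be a closed convex set inducing an MICP formulation of a set $S\subseteq\mathbb{R}^n$. Let $I=\operatorname{proj}_{\mathbf z}(M)$ be its index set and $\{A_{\mathbf z}\}_{\mathbf z\in I}$ its $\mathbf z$-projected sets. Then \[ \big(\operatorname{cl}(A_{\mathbf z})\big)_\infty=\big(\operatorname{cl}(A_{\mathbf z'})\big)_\infty\qquad\text{for all }\mathbf z,\mathbf z'\in\operatorname{relint}(I). \]
   Context: Variables in $\mathbb{R}^{n+p+d}$ are written $(\mathbf x,\mathbf y,\mathbf z)$ with $\mathbf x\in\mathbb{R}^n$, $\mathbf y\in\mathbb{R}^p$, $\mathbf z\in\mathbb{R}^d$; $\operatorname{proj}_{\mathbf x}$, $\operatorname{proj}_{\mathbf z}$ denote the coordinate projections. A closed convex set $M\subseteq\mathbb{R}^{n+p+d}$ induces an MICP formulation of $S\subseteq\mathbb{R}^n$ if: $\mathbf x\in S$ iff there exist $\mathbf y\in\mathbb{R}^p$, $\mathbf z\in\mathbb{Z}^d$ with $(\mathbf x,\mathbf y,\mathbf z)\in M$. The index set of the formulation is $I=\operatorname{proj}_{\mathbf z}(M)$, and for each $\mathbf z\in I$ the $\mathbf z$-projected set is $A_{\mathbf z}=\operatorname{proj}_{\mathbf x}\big(M\cap(\mathbb{R}^{n+p}\times\{\mathbf z\})\big)$. For a convex set $C$, its recession cone is $C_\infty=\{\mathbf r:\ \mathbf x+\lambda\mathbf r\in C\ \forall\mathbf x\in C,\ \forall\lambda\ge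 0\}$. $\operatorname{cl}$ denotes closure and $\operatorname{relint}$ relative interior. *)

(* Defs.v *)
From HB Require Import structures.
From mathcomp Require Import all_boot all_order all_algebra.
From mathcomp Require Import all_classical all_reals topology normedtype.
Set Implicit Arguments. Unset Strict Implicit. Unset Printing Implicit Defensive.
Import Order.TTheory GRing.Theory Num.Theory.
Import numFieldNormedType.Exports.
Local Open Scope classical_set_scope.
Local Open Scope ring_scope.

Definition convex_vset (R : realType) (k : nat) (C : set 'rV[R]_k) : Prop :=
  forall x y (t : R), C x -> C y -> 0 <= t -> t <= 1 ->
    C (t *: x + (1 - t) *: y).

Definition aff_hull (R : realType) (k : nat) (C : set 'rV[R]_k) : set 'rV[R]_k :=
  [set x | exists (m : nat) (v : 'I_m -> 'rV[R]_k) (c : 'I_m -> R),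
     (forall i, C (v i)) /\ \sum_(i < m) c i = 1 /\ x = \sum_(i < m) c i *: v i].

Definition relint (R : realType) (k : nat) (C : set 'rV[R]_k) : set 'rV[R]_k :=
  [set x | C x /\ exists2 e : R, 0 < e &
     forall y, aff_hull C y -> `|y - x| < e -> C y].

Definition rec_cone (R : realType) (k : nat) (C : set 'rV[R]_k) : set 'rV[R]_k :=
  [set r | forall x, C x -> forall l : R, 0 <= l -> C (x + l *: r)].

Definition int_vec (R : realType) (k : nat) (z : 'rV[R]_k) : Prop :=
  forall i, z ord0 i \is a Num.int.

Definition pt (R : realType) (n p d : nat) (x : 'rV[R]_n) (y : 'rV[R]_p)
  (z : 'rV[R]_d) : 'rV[R]_(n + (p + d)) := row_mx x (row_mx y z).

Definition induces_MICP (R : realType) (n p d : nat)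
  (M : set 'rV[R]_(n + (p + d))) (S : set 'rV[R]_n) : Prop :=
  closed M /\ convex_vset M /\
  forall x, S x <-> exists y z, int_vec z /\ M (pt x y z).

Definition index_set (R : realType) (n p d : nat)
  (M : set 'rV[R]_(n + (p + d))) : set 'rV[R]_d :=
  [set z | exists x y, M (pt x y z)].

Definition zproj_set (R : realType) (n p d : nat)
  (M : set 'rV[R]_(n + (p + d))) (z : 'rV[R]_d) : set 'rV[R]_n :=
  [set x | exists y, M (pt x y z)].

(* Main.v *)
Require Import Defs.
From HB Require Import structures.
From mathcomp Require Import all_boot all_order all_algebra.
From mathcomp Require Import all_classical all_reals topology normedtype.
From mathcomp Require Import ring lra.
Import Order.TTheory GRing.Theory Num.Theory.
Import numFieldNormedType.Exports.
Local Open Scope classical_set_scope.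
Local Open Scope ring_scope.

Lemma closure_epsP (R : realType) (k : nat) (A : set 'rV[R]_k) x :
  closure A x <-> forall e : R, 0 < e -> exists a, A a /\ `|x - a| < e.
Proof.
split.
- move=> cl e e0.
  have := cl (ball x e) (nbhsx_ballx x e e0).
  move=> [a [Aa Ba]]; exists a; split => //.
  by move: Ba; rewrite -ball_normE /=.
- move=> H B /nbhs_ballP [e e0 sB].
  have [a [Aa xa]] := H e e0.
  exists a; split => //; apply: sB; rewrite -ball_normE /=.
  exact: xa.
Qed.

Lemma zproj_conv (R : realType) (n p d : nat) (M : set 'rV[R]_(n + (p + d)))
  z1 z2 x1 x2 (t : R) : convex_vset M ->
  zproj_set M z1 x1 -> zproj_set M z2 x2 -> 0 <= t -> t <= 1 ->
  zproj_set M (t *: z1 + (1 - t) *: z2) (t *: x1 + (1 - t) *: x2).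
Proof.
move=> cM [y1 M1] [y2 M2] t0 t1; exists (t *: y1 + (1 - t) *: y2).
have -> : pt (t *: x1 + (1 - t) *: x2) (t *: y1 + (1 - t) *: y2)
   (t *: z1 + (1 - t) *: z2) = t *: pt x1 y1 z1 + (1 - t) *: pt x2 y2 z2.
  by rewrite /pt !scale_row_mx !add_row_mx.
exact: cM.
Qed.

Lemma rec_incl (R : realType) (n p d : nat) (M : set 'rV[R]_(n + (p + d)))
  z z' : convex_vset M -> relint (index_set M) z -> index_set M z' ->
  rec_cone (closure (zproj_set M z')) `<=` rec_cone (closure (zproj_set M z)).
Proof.
move=> cM [Iz [e e0 He]] Iz' r rr x clx l l0.
have [a [ya Ma]] := Iz'.
set w := z - z'.
set dl := e / (`|w| + 1).
have w1 : 0 < `|w| + 1 by rewrite ltr_wpDl.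
have dl0 : 0 < dl by rewrite divr_gt0.
set z'' := (1 + dl) *: z - dl *: z'.
have Iz'' : index_set M z''.
  apply: He.
    exists 2%N, (fun i : 'I_2 => if i == ord0 then z else z'),
      (fun i : 'I_2 => if i == ord0 then 1 + dl else - dl).
    split; first by move=> i; case: ifP.
    rewrite !big_ord_recl !big_ord0 /=; split; first by ring.
    by apply/matrixP => i j; rewrite !mxE; ring.
  have -> : z'' - z = dl *: w.
    by apply/matrixP => i j; rewrite !mxE; ring.
  rewrite normrZ gtr0_norm // /dl -mulrA mulrC -mulrA ltr_pdivrMl //.
  by rewrite ltr_pM2r // ltrDl.
move: Iz'' => [b [yb Mb]].
set t := dl / (1 + dl).
have dl1 : 0 < 1 + dl by rewrite ltr_wpDl // ltW.
have t0 : 0 < t by rewrite divr_gt0.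
have t1 : t <= 1 by rewrite ler_pdivrMr // mul1r lerDr.
have zE : t *: z' + (1 - t) *: z'' = z.
  apply/matrixP => i j; rewrite !mxE /t; field.
  by rewrite lt0r_neq0.
set c0 := t *: a + (1 - t) *: b.
apply/closure_epsP => eps eps0.
have e30 : 0 < eps / 3 by rewrite divr_gt0.
have [xt [Axt xxt]] := proj1 (closure_epsP _ _ _ _) clx (eps / 3) e30.
set N := `|x - c0|.
set s := eps / (3 * N + eps).
have N0 : 0 <= N := normr_ge0 _.
have D0 : 0 < 3 * N + eps by lra.
have s0 : 0 < s by rewrite divr_gt0.
have s1 : s <= 1 by rewrite ler_pdivrMr // mul1r; lra.
have sD : s * (3 * N + eps) = eps by rewrite divfK // lt0r_neq0.
have sN : s * N < eps / 3.
  rewrite ltr_pdivlMr //; nra.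
set pp := a + ((l / s) / t) *: r.
have clp : closure (zproj_set M z') pp.
  apply: rr; first by apply: subset_closure; exists ya.
  by rewrite !divr_ge0 // ltW.
have [a' [Aa' paa']] := proj1 (closure_epsP _ _ _ _) clp (eps / 3) e30.
have q1 : zproj_set M z (t *: a' + (1 - t) *: b).
  rewrite -zE; apply: zproj_conv => //; [by exists yb | exact: ltW].
have q2 : zproj_set M z (s *: (t *: a' + (1 - t) *: b) + (1 - s) *: xt).
  have -> : z = s *: z + (1 - s) *: z.
    by apply/matrixP => i j; rewrite !mxE; ring.
  by apply: zproj_conv => //; exact: ltW.
exists (s *: (t *: a' + (1 - t) *: b) + (1 - s) *: xt); split => //.
have -> : x + l *: r - (s *: (t *: a' + (1 - t) *: b) + (1 - s) *: xt) =
   (1 - s) *: (x - xt) + s *: (x - c0) + (s * t) *: (pp - a').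
  apply/matrixP => i j; rewrite /pp /c0 !mxE; field.
  by rewrite !lt0r_neq0.
apply: (le_lt_trans (ler_normD _ _)).
apply: (@le_lt_trans _ _ (`|x - xt| + s * N + `|pp - a'|)); last by lra.
apply: (le_trans (lerD (ler_normD _ _) (lexx _))).
have s1' : 0 <= 1 - s by lra.
have st0 : 0 <= s * t by rewrite mulr_ge0 // ltW.
rewrite (normrZ (1 - s)) (normrZ s) (normrZ (s * t)).
rewrite (ger0_norm s1') (ger0_norm st0) (ger0_norm (ltW s0)).
apply: lerD; [apply: lerD|].
- by rewrite ler_piMl // lerBlDr lerDl ltW.
- by [].
- by rewrite ler_piMl // mulr_ile1 // ltW.
Qed.

Theorem proposition1 (R : realType) (n p d : nat)
  (M : set 'rV[R]_(n + (p + d))) (S : set 'rV[R]_n) :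
  induces_MICP M S ->
  forall z z' : 'rV[R]_d,
    relint (index_set M) z -> relint (index_set M) z' ->
    rec_cone (closure (zproj_set M z)) = rec_cone (closure (zproj_set M z')).
Proof.
move=> [_ [cM _]] z z' rz rz'.
apply/seteqP; split.
- exact: (@rec_incl R n p d M z' z cM rz' rz.1).
- exact: (@rec_incl R n p d M z z' cM rz rz'.1).
Qed.
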